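(* Let $k$ be a positive integer such that $k+1$ is an odd prime. For every $\mathbf v\in N_k$ there exist $s,r\in\mathbb{Z}_{k+1}^\times$ such that every coordinate of $s\mathbf v+r(1,2,\ldots,k)\in\mathbb{Z}_{k+1}^k$ lies in $\{1,2,\ldots,k-1\}$ (as residues modulo $k+1$).
   Context: $\mathbb{Z}_{k+1}$ is the integers modulo $k+1$ and $\mathbb{Z}_{k+1}^\times$ its group of units. $N_k:=\{\mathbf v\in\mathbb{Z}_{k+1}^k:\ \mathbf v\neq\mathbf 0 \text{ and } \mathbf v \text{ has at least one zero coordinate}\}$. *)

(* Defs.v *)
From mathcomp Require Import all_boot all_order all_algebra.
Set Implicit Arguments. Unset Strict Implicit. Unset Printing Implicit Defensive.
Import GRing.Theory.
Local Open Scope ring_scope.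

(* N_k : nonzero vectors of Z_(k+1)^k with at least one zero coordinate.
   Vectors are row vectors 'rV['Z_(k.+1)]_k indexed by i : 'I_k,
   where coordinate i corresponds to the paper's coordinate i+1. *)
Definition in_Nk (k : nat) (v : 'rV['Z_(k.+1)]_k) : Prop :=
  v != 0 /\ exists i : 'I_k, v 0 i = 0.

Definition idvec (k : nat) : 'rV['Z_(k.+1)]_k := \row_(i < k) (i.+1)%:R.

(* Main.v *)
Require Import Defs.
From mathcomp Require Import all_boot all_order all_algebra.
From mathcomp Require Import zify.
Set Implicit Arguments. Unset Strict Implicit. Unset Printing Implicit Defensive.
Import GRing.Theory.
Local Open Scope ring_scope.

Section Main.
Variable k : nat.
Hypothesis Hp : prime k.+1.
Local Notation F := 'F_(k.+1).

Lemma cardF : #|F| = k.+1.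
Proof. exact: card_Fp. Qed.

Lemma charF : (k.+1)%:R = 0 :> F.
Proof. exact: pchar_Fp_0. Qed.

Lemma card_nz : #|[pred y : F | y != 0]| = k.
Proof.
have := cardC [pred y : F | y == 0]. rewrite cardF.
have -> : #|[pred y : F | y == 0]| = 1%N.
  by rewrite -(card1 (0:F)); apply: eq_card => y; rewrite !inE.
have E : #|[pred y : F | y != 0]| = #|[predC [pred y : F | y == 0]]|.
  by apply: eq_card => y; rewrite !inE.
by rewrite E => /succn_inj.
Qed.

Lemma psum l : (l < k)%N -> \sum_(t : F) t ^+ l = 0.
Proof.
move=> hl.
case: l hl => [|l] hl.
  under eq_bigr do rewrite expr0.
  by rewrite sumr_const cardF charF.
have [a anz an1] : exists2 a : F, a != 0 & a ^+ l.+1 != 1.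
  case: (boolP [exists a : F, (a != 0) && (a ^+ l.+1 != 1)]).
    by move=> /existsP [a /andP [anz an1]]; exists a.
  rewrite negb_exists => /forallP H; exfalso.
  have := @max_poly_roots _ ('X^(l.+1) - 1) (enum [pred y : F | y != 0]).
  rewrite -polyC1 size_XnsubC // -size_poly_gt0 size_XnsubC //.
  rewrite enum_uniq -cardE card_nz.
  have Hall : all (root ('X^(l.+1) - 1%:P)) (enum [pred y : F | y != 0]).
    apply/allP => y; rewrite mem_enum inE => ynz.
  by rewrite /root hornerD hornerN hornerXn hornerC subr_eq0; move: (H y); rewrite ynz /= negbK.
  by move=> /(_ isT Hall isT); rewrite ltnNge hl.
set S := \sum_(t : F) _.
have : S = a ^+ l.+1 * S.
  rewrite {1}/S (reindex_inj (mulfI anz)) /= /S mulr_sumr.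
  by apply: eq_bigr => t _; rewrite exprMn.
move/eqP; rewrite -subr_eq0 -{1}(mul1r S) -mulrBl mulf_eq0 subr_eq0 eq_sym.
by rewrite (negPf an1) => /eqP.
Qed.

Lemma polysum (q : {poly F}) : (size q <= k)%N -> \sum_(t : F) q.[t] = 0.
Proof.
move=> hq.
under eq_bigr do rewrite horner_coef.
rewrite exchange_big /= big1 // => i _.
by rewrite -mulr_sumr psum ?mulr0 // (leq_trans (ltn_ord i)).
Qed.


Lemma prod_nz (f : 'I_k -> F) : (forall i, f i != 0) ->
  (forall u, u != 0 -> exists i, f i = u) -> \prod_i f i = \prod_(y : F | y != 0) y.
Proof.
move=> nz su.
have E : f @: setT = [set y : F | y != 0].
  apply/setP => y; rewrite inE; apply/imsetP/idP => [[i _ ->]|ynz]; first exact: nz.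
  by have [i <-] := su y ynz; exists i.
have inj : {in setT &, injective f}.
  apply/imset_injP; rewrite E cardsT card_ord.
  by rewrite (@eq_card _ _ [pred y : F | y != 0]) ?card_nz // => y; rewrite !inE.
transitivity (\prod_(i in [set: 'I_k]) f i); first by apply: eq_bigl => i; rewrite inE.
rewrite -(big_imset (fun y => y) inj) E; apply: eq_bigl => y; by rewrite inE.
Qed.

Lemma a_nz (i : 'I_k) : (i.+1)%:R != 0 :> F.
Proof.
apply/eqP => h; have := congr1 (fun z : F => nat_of_ord z) h; rewrite val_Fp_nat // modn_small //.
by rewrite ltnS ltn_ord.
Qed.

Lemma valF (y : F) : (nat_of_ord y < k.+1)%N.
Proof. by apply: (leq_trans (ltn_ord y)); rewrite Fp_cast. Qed.

Lemma a_surj u : u != 0 :> F -> exists i : 'I_k, (i.+1)%:R = u.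
Proof.
move=> unz.
have h0 : (nat_of_ord u != 0)%N.
  apply: contra unz => /eqP h; apply/eqP; apply: val_inj; exact: h.
have hk : ((nat_of_ord u).-1 < k)%N by have := valF u; move: h0; move: (nat_of_ord u) => n; lia.
exists (Ordinal hk) => /=.
by rewrite prednK ?lt0n // natr_Zp.
Qed.

Lemma key (v : 'I_k -> F) (i0 j0 : 'I_k) : v i0 != 0 -> v j0 = 0 ->
  exists t : F, [/\ t != 0, forall i : 'I_k, (i.+1)%:R + t * v i != 0 &
    exists2 u : F, u != 0 & forall i : 'I_k, (i.+1)%:R + t * v i != u].
Proof.
move=> vi0 vj0.
case: (boolP [exists t : F, [&& t != 0, [forall i : 'I_k, (i.+1)%:R + t * v i != 0] &
   [exists u, (u != 0) && [forall i : 'I_k, (i.+1)%:R + t * v i != u]]]]).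
  move=> /existsP [t /and3P [tnz /forallP h1 /existsP [u /andP [unz /forallP h2]]]].
  by exists t; split => //; exists u.
move=> /negP nH; exfalso.
pose P t := \prod_(i : 'I_k) ((i.+1)%:R + t * v i).
pose c := \prod_(i : 'I_k) ((i.+1)%:R : F).
have cE : c = \prod_(y : F | y != 0) y by apply: prod_nz; [exact: a_nz | exact: a_surj].
have cnz : c != 0 by apply/prodf_neq0 => i _; exact: a_nz.
have P0 : P 0 = c by apply: eq_bigr => i _; rewrite mul0r addr0.
have hP : forall t, P t != 0 -> P t = c.
  move=> t Pnz; have [->|tnz] := eqVneq t 0; first exact: P0.
  have xnz : forall i : 'I_k, (i.+1)%:R + t * v i != 0 by move=> i; move/prodf_neq0: Pnz; apply.
  rewrite cE; apply: prod_nz => // u unz.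
  case: (boolP [exists i : 'I_k, (i.+1)%:R + t * v i == u]).
    by move=> /existsP [i /eqP]; exists i.
  rewrite negb_exists => /forallP hu; exfalso; apply: nH.
  apply/existsP; exists t; rewrite tnz /=; apply/andP; split; first by apply/forallP.
  by apply/existsP; exists u; rewrite unz; apply/forallP.
pose Q := \prod_(i : 'I_k) (((i.+1)%:R : F)%:P + 'X * (v i)%:P).
have QE : forall t, Q.[t] = P t.
  move=> t; rewrite horner_prod; apply: eq_bigr => i _.
  by rewrite hornerD hornerC hornerM hornerX hornerC.
have sQ : (size Q <= k)%N.
  apply: leq_trans (size_poly_prod_leq _ _) _.
  rewrite (bigD1 j0) //= vj0 mulr0 addr0 size_polyC.
  have : (\sum_(i | i != j0) size ((((i.+1)%:R : F)%:P + 'X * (v i)%:P)%R) <=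
            \sum_(i | i != j0) 2)%N.
    apply: leq_sum => i _; apply: leq_trans (size_polyD _ _) _.
    rewrite geq_max (leq_trans (size_polyC_leq1 _)) //=.
    by rewrite mulrC mul_polyC (leq_trans (size_scale_leq _ _)) // size_polyX.
  rewrite sum_nat_const cardC1 card_ord => hs.
  have := ltn_ord j0; move: hs.
  move: (leq_b1 ((j0.+1)%:R != 0 :> F)).
  move: (nat_of_bool _) (\sum_(i | i != j0) _)%N => b S.
  lia.
have sumP : \sum_(t : F) P t = 0.
  by rewrite -[RHS](polysum sQ); apply: eq_bigr => t _; rewrite QE.
have : \sum_(t : F) P t = c *+ #|[pred t : F | P t != 0]|.
  rewrite (bigID (fun t => P t != 0)) /= [X in _ + X]big1 ?addr0; last by move=> t /negPn /eqP.
  rewrite -sumr_const; apply: eq_big => [t|t tP] //; exact: hP.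
rewrite sumP => /esym /eqP; rewrite -mulr_natr mulf_eq0 (negPf cnz) /= => /eqP hN.
set N := #|_| in hN.
have hmod : (N %% k.+1 = 0)%N.
  by have := congr1 (fun z : F => nat_of_ord z) hN; rewrite val_Fp_nat.
have hle : (N <= k.+1)%N by rewrite -cardF max_card.
have hgt : (0 < N)%N.
  rewrite /N (cardD1 0) inE /= P0 cnz //.
have NE : N = k.+1.
  case: (ltngtP N k.+1) hle => // hlt _.
  by move: hmod; rewrite modn_small // => h; rewrite h in hgt.
have hC := cardC [pred t : F | P t != 0]; rewrite -/N NE cardF in hC.
move/(congr1 (subn^~ k.+1)): hC; rewrite addKn subnn => /card0_eq h0.
pose t0 := - (i0.+1)%:R / v i0.
have : P t0 == 0.
  apply/prodf_eq0; exists i0 => //.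
  by rewrite /t0 divfK // subrr.
move=> /eqP Pt0; have := h0 t0; rewrite !inE /= Pt0 eqxx.
done.
Qed.


Lemma natbound (y : F) : y != 0 -> y != -1 -> (1 <= nat_of_ord y <= k.-1)%N.
Proof.
move=> y0 y1.
have hv := valF y.
have h0 : (nat_of_ord y != 0)%N.
  apply: contra y0 => /eqP h; apply/eqP; apply: val_inj; by rewrite /= h.
have hk : (nat_of_ord y != k)%N.
  apply: contra y1 => /eqP h; apply/eqP.
  rewrite -(natr_Zp y) h; apply/eqP; rewrite -subr_eq0 opprK natr1.
  by apply/eqP; exact: charF.
move: hv h0 hk; move: (nat_of_ord y) => n; lia.
Qed.

Lemma mainF (v : 'rV[F]_k) : v != 0 -> (exists i, v 0 i = 0) ->
  exists s r : F, [/\ s \is a GRing.unit, r \is a GRing.unit &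
      forall i : 'I_k,
        let c : nat := nat_of_ord ((s *: v + r *: \row_(i < k) ((i.+1)%:R : F)) 0 i) in
        (1 <= c <= k.-1)%N].
Proof.
move=> vnz [j0 vj0].
have [i0 vi0] : exists i0, v 0 i0 != 0.
  case: (boolP [exists i, v 0 i != 0]) => [/existsP [i hi]|]; first by exists i.
  rewrite negb_exists => /forallP h; exfalso; move/eqP: vnz; apply.
  apply/matrixP => a b; rewrite ord1 mxE; exact/eqP/negPn/h.
have [t [tnz xnz [u unz hu]]] := key vi0 vj0.
exists (t * - u^-1), (- u^-1).
have rnz : - u^-1 != 0 by rewrite oppr_eq0 invr_eq0.
split; rewrite ?unitfE ?mulf_neq0 // => i /=.
rewrite !mxE.
have -> : t * - u^-1 * v 0 i + - u^-1 * (i.+1)%:R = - u^-1 * ((i.+1)%:R + t * v 0 i).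
  by rewrite mulrDr addrC mulrA [- u^-1 * t]mulrC.
apply: natbound; first by rewrite mulf_neq0.
apply: contra (hu i) => /eqP h; apply/eqP.
move: h; rewrite mulNr => /oppr_inj h.
by rewrite -[LHS](mulKf (invr_neq0 unz)) h invrK mulr1.
Qed.

End Main.

Definition Stmt (k n : nat) := forall v : 'rV['Z_n]_k, v != 0 -> (exists i, v 0 i = 0) ->
  exists s r : 'Z_n, [/\ s \is a GRing.unit, r \is a GRing.unit &
      forall i : 'I_k,
        let c : nat := nat_of_ord ((s *: v + r *: \row_(i < k) ((i.+1)%:R : 'Z_n)) 0 i) in
        (1 <= c <= k.-1)%N].

Lemma stmt_ok k : prime k.+1 -> Stmt k k.+1.
Proof.
move=> Hp; have H : Stmt k (pdiv k.+1) by move=> v; exact: mainF.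
by rewrite pdiv_id in H.
Qed.

Theorem proposition4p1 (k : nat) (Hk : (0 < k)%N) (Hp : prime k.+1)
  (Hodd : odd k.+1) (v : 'rV['Z_(k.+1)]_k) :
  in_Nk v ->
  exists s r : 'Z_(k.+1),
    [/\ s \is a GRing.unit, r \is a GRing.unit &
      forall i : 'I_k,
        let c : nat := nat_of_ord ((s *: v + r *: idvec k) 0 i) in
        (1 <= c <= k.-1)%N].
Proof.
move=> [vnz ex]; exact: (stmt_ok Hp vnz ex).
Qed.
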